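(* Let $\mathcal H$ be a complex Hilbert space of finite dimension $n$, and let $\mathbf A=(A_1,\dots,A_m)$ be an $m$-tuple of self-adjoint operators on $\mathcal H$ such that $\{A_1,\dots,A_m\}$ is linearly independent. Assume $\mathbf 0\in\Lambda_{n-1}(\mathbf A)$, i.e., there is an orthonormal basis of $\mathcal H$ in which every $A_j$ has matrix of the form $\begin{pmatrix} * & * \\ * & 0_{n-1}\end{pmatrix}$. (a) If $m=2n-1$, then there is an invertible $S\in M_m(\mathbb R)$ such that $$\Lambda_1(\mathbf A)=\Big\{(1+u_1,u_2,\dots,u_m)S:\ u_1,\dots,u_m\in\mathbb R,\ \sum_{j=1}^m u_j^2=1\Big\},$$ so that $\Lambda_1(\mathbf A)$ is not star-shaped. (b) If $m<2n-1$, then $\Lambda_1(\mathbf A)$ is star-shaped with $\mathbf 0$ as a star center.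
   Context: For an $m$-tuple $\mathbf A=(A_1,\dots,A_m)$ of self-adjoint operators on a complex Hilbert space $\mathcal H$ and a positive integer $k$, $\Lambda_k(\mathbf A)=\{(a_1,\dots,a_m)\in\mathbb R^m:$ there is an orthogonal projection $P$ of rank $k$ with $PA_jP=a_jP$ for all $j\}$; in particular $\Lambda_1(\mathbf A)=\{(\langle A_1x,x\rangle,\dots,\langle A_mx,x\rangle): x\in\mathcal H,\ \|x\|=1\}$ is the joint numerical range. A set $S\subseteq\mathbb R^m$ is star-shaped with star center $\mathbf c\in S$ if for every $\mathbf b\in S$ the segment joining $\mathbf c$ and $\mathbf b$ lies in $S$. Row vectors in $\mathbb R^m$ are multiplied on the right by $m\times m$ matrices. *)

(* Defs.v *)
(* The n-dimensional complex Hilbert space is C^n,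
   realized as column vectors 'cV[R[i]]_n; operators are n x n complex matrices. *)
From HB Require Import structures.
From mathcomp Require Import all_boot all_order all_algebra.
From mathcomp Require Import reals complex.
Set Implicit Arguments.
Unset Strict Implicit.
Unset Printing Implicit Defensive.
Import Order.TTheory GRing.Theory Num.Theory.
Local Open Scope ring_scope.

Definition adjmx (R : realType) (p q : nat) (A : 'M[R[i]]_(p, q)) : 'M[R[i]]_(q, p) :=
  map_mx (@conjc R) A^T.

Definition selfadj (R : realType) (n : nat) (A : 'M[R[i]]_n) : Prop :=
  adjmx A = A.

Definition lin_indep (R : realType) (n m : nat) (A : 'I_m -> 'M[R[i]]_n) : Prop :=
  forall c : 'I_m -> R,
    \sum_(j < m) (c j)%:C%C *: A j = 0 -> forall j, c j = 0.

Definition orth_proj (R : realType) (n k : nat) (P : 'M[R[i]]_n) : Prop :=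
  adjmx P = P /\ P *m P = P /\ \rank P = k.

Definition Lambda (R : realType) (n m k : nat) (A : 'I_m -> 'M[R[i]]_n)
    (a : 'rV[R]_m) : Prop :=
  exists P : 'M[R[i]]_n, orth_proj k P /\
    forall j : 'I_m, P *m A j *m P = (a 0 j)%:C%C *: P.

(* Lambda_1(A): the joint numerical range
   {(<A_1 x, x>, ..., <A_m x, x>) : ||x|| = 1}, with <y, x> = x^* y. *)
Definition jnr (R : realType) (n m : nat) (A : 'I_m -> 'M[R[i]]_n)
    (a : 'rV[R]_m) : Prop :=
  exists x : 'cV[R[i]]_n, (adjmx x *m x) 0 0 = 1 /\
    forall j : 'I_m, (adjmx x *m (A j *m x)) 0 0 = (a 0 j)%:C%C.

Definition star_center (R : realType) (m : nat) (S : 'rV[R]_m -> Prop)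
    (c : 'rV[R]_m) : Prop :=
  S c /\ forall b, S b -> forall t : R, 0 <= t <= 1 -> S ((1 - t) *: c + t *: b).

Definition star_shaped (R : realType) (m : nat) (S : 'rV[R]_m -> Prop) : Prop :=
  exists c, star_center S c.

(* Main.v *)
Require Import Defs.
From HB Require Import structures.
From mathcomp Require Import all_boot all_order all_algebra.
From mathcomp Require Import reals complex.
From mathcomp Require Import spectral sesquilinear.
From mathcomp Require Import ring lra zify.
Import Order.TTheory GRing.Theory Num.Theory.
Local Open Scope ring_scope.

Module Aux.
Set Implicit Arguments.
Unset Strict Implicit.
Unset Printing Implicit Defensive.
Import Num.Def.
Section Adj.
Local Open Scope sesquilinear_scope.
Variable R : realType.

Lemma adjmxE p q (X : 'M[R[i]]_(p, q)) : adjmx X = X ^t conjC.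
Proof. by []. Qed.

Lemma adjmxM p q r (X : 'M[R[i]]_(p, q)) (Y : 'M[R[i]]_(q, r)) :
  adjmx (X *m Y) = adjmx Y *m adjmx X.
Proof. by rewrite /adjmx trmx_mul map_mxM. Qed.

Lemma adjmxK p q (X : 'M[R[i]]_(p, q)) : adjmx (adjmx X) = X.
Proof. by rewrite !adjmxE trmxCK. Qed.

Lemma rank_sum_le p q N (F : 'I_N -> 'M[R[i]]_(p, q)) :
  (\rank (\sum_i F i)%R <= \sum_i \rank (F i))%N.
Proof.
apply: (big_ind2 (fun (M : 'M[R[i]]_(p, q)) (k : nat) => \rank M <= k)%N); first by rewrite mxrank0.
  move=> M1 k1 M2 k2 h1 h2; apply: leq_trans (mxrank_add _ _) _.
  exact: leq_add.
by [].
Qed.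

Lemma diag_sum n (d : 'rV[R[i]]_n) :
  diag_mx d = \sum_i d 0 i *: delta_mx i i.
Proof.
apply/matrixP => i j; rewrite !mxE summxE.
rewrite (bigD1 i) //= big1 => [|k kne]; rewrite !mxE.
  rewrite eqxx addr0; case: (eqVneq i j) => [->|ne] /=.
    by rewrite mulr1.
  by rewrite mulr0n mulr0.
by rewrite eq_sym (negbTE kne) mulr0.
Qed.


Lemma proj_diag n (P : 'M[R[i]]_n) : (1 < n)%N -> orth_proj n.-1 P ->
  exists V : 'M[R[i]]_n, V \is unitarymx /\ exists i0 : 'I_n,
     P = V ^t conjC *m diag_mx (\row_i (if i == i0 then 0 else 1)) *m V.
Proof.
move=> n_gt1 [Padj [Pidem Prank]].
have Pnormal : P \is normalmx by apply/normalmxP; rewrite -adjmxE Padj.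
move/orthomx_spectralP: Pnormal.
set V := spectralmx P; set d := spectral_diag P => Peq.
have Vu : V \is unitarymx := spectral_unitarymx P.
rewrite invmx_unitary // in Peq.
have VV : V *m V ^t conjC = 1%:M := unitarymxP Vu.
have VtV : V ^t conjC *m V = 1%:M.
  have Vu' : V ^t conjC \is unitarymx by rewrite trmxC_unitary.
  by have := unitarymxP Vu'; rewrite trmxCK.
set D := diag_mx d in Peq.
have DP : D = V *m P *m V ^t conjC.
  by rewrite Peq !mulmxA VV mul1mx -!mulmxA VV mulmx1.
have DD : D *m D = D.
  rewrite DP -!mulmxA (mulmxA (V ^t conjC)) VtV mul1mx !mulmxA.
  by rewrite -(mulmxA V P P) Pidem.
have d01 : forall i, d 0 i = 0 \/ d 0 i = 1.
  move=> i; move/matrixP/(_ i i): DD; rewrite mulmx_diag !mxE eqxx !mulr1n => h.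
  have : d 0 i * (d 0 i - 1) = 0 by rewrite mulrBr mulr1 h subrr.
  by move/eqP; rewrite mulf_eq0 subr_eq0 => /orP[/eqP->|/eqP->]; [left|right].
have rankD : \rank D = n.-1.
  apply/eqP; rewrite eqn_leq; apply/andP; split.
    by rewrite -Prank DP (leq_trans (mxrankM_maxl _ _)) // mxrankM_maxr.
  by rewrite -Prank Peq (leq_trans (mxrankM_maxl _ _)) // mxrankM_maxr.
have [i0 di0] : exists i0, d 0 i0 = 0.
  case: (pickP (fun i => d 0 i == 0)) => [i0 /eqP h|none]; first by exists i0.
  have : D = 1%:M.
    apply/matrixP => i j; rewrite !mxE; case: (eqVneq i j) => [->|ne] //=.
    case: (d01 j) => // /eqP; by rewrite none.
  move=> D1; exfalso; move: rankD; rewrite D1 mxrank1 => h; lia.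
have dother : forall i, i != i0 -> d 0 i = 1.
  move=> i ne; case: (d01 i) => // di.
  have [k1 ik1 _] := unlift_some (introN eqP (fun e => (negP ne) (introT eqP (esym e)))) .
  exfalso; move: rankD; rewrite /D diag_sum => rk.
  have := rank_sum_le (fun k => d 0 k *: delta_mx k k); rewrite rk.
  rewrite (bigD1_ord i0) //= (bigD1_ord k1) //= -ik1 di di0 !scale0r !mxrank0 !add0n.
  move=> h; have : (n.-1 <= n.-1.-1)%N.
    apply: leq_trans h _.
    rewrite -[X in (_ <= X)%N]card_ord -sum1_card.
    apply: leq_sum => k _.
    by apply: leq_trans (mxrank_scale _ _) _; rewrite mxrank_delta.
  move=> h'; lia.
exists V; split => //; exists i0; rewrite Peq /D; congr (_ *m diag_mx _ *m _).
apply/rowP => i; rewrite !mxE; case: (eqVneq i i0) => [->|ne] //.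
exact: dother.
Qed.

Lemma jnr_conj n m (A : 'I_m -> 'M[R[i]]_n) (U : 'M[R[i]]_n) a :
  U ^t conjC *m U = 1%:M -> jnr A a -> jnr (fun j => U *m A j *m U ^t conjC) a.
Proof.
move=> UU [x [hx hA]]; exists (U *m x); split.
  by rewrite adjmxM adjmxE -mulmxA (mulmxA (U ^t conjC)) UU mul1mx.
move=> j; rewrite -hA adjmxM adjmxE -!mulmxA (mulmxA (U ^t conjC)) UU mul1mx.
by rewrite (mulmxA (U ^t conjC)) UU mul1mx.
Qed.

Lemma selfadj_conj n (A : 'M[R[i]]_n) (U : 'M[R[i]]_n) :
  selfadj A -> selfadj (U *m A *m U ^t conjC).
Proof.
by rewrite /selfadj => hA; rewrite !adjmxM hA -adjmxE adjmxK mulmxA.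
Qed.

Lemma lin_indep_conj n m (A : 'I_m -> 'M[R[i]]_n) (U : 'M[R[i]]_n) :
  U ^t conjC *m U = 1%:M ->
  lin_indep A -> lin_indep (fun j => U *m A j *m U ^t conjC).
Proof.
move=> UU hA c hc; apply: hA.
have : U ^t conjC *m (\sum_(j < m) (c j)%:C%C *: (U *m A j *m U ^t conjC)) *m U = 0.
  by rewrite hc mulmx0 mul0mx.
rewrite mulmx_sumr mulmx_suml => h; apply: etrans h; apply: eq_bigr => j _.
by rewrite -scalemxAr -scalemxAl -!mulmxA UU mulmx1 !mulmxA UU mul1mx.
Qed.

Lemma block_zero n (P A V : 'M[R[i]]_n) (i0 : 'I_n) :
  V \is unitarymx ->
  P = V ^t conjC *m diag_mx (\row_i (if i == i0 then 0 else 1)) *m V ->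
  P *m A *m P = 0 ->
  forall i k, i != i0 -> k != i0 -> (V *m A *m V ^t conjC) i k = 0.
Proof.
move=> Vu Peq hP i k ni nk.
have VV : V *m V ^t conjC = 1%:M := unitarymxP Vu.
set Dg := diag_mx _ in Peq.
have DP : Dg = V *m P *m V ^t conjC.
  by rewrite Peq !mulmxA VV mul1mx -!mulmxA VV mulmx1.
have : Dg *m (V *m A *m V ^t conjC) *m Dg = 0.
  rewrite DP -!mulmxA (mulmxA (V ^t conjC) V) .
  have VtV : V ^t conjC *m V = 1%:M.
    have Vu' : V ^t conjC \is unitarymx by rewrite trmxC_unitary.
    by have := unitarymxP Vu'; rewrite trmxCK.
  rewrite VtV mul1mx (mulmxA (V ^t conjC) V) VtV mul1mx.
  by rewrite !mulmxA -(mulmxA V) -(mulmxA V) hP mulmx0 mul0mx.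
move/matrixP/(_ i k); rewrite mul_mx_diag mul_diag_mx !mxE (negbTE ni) (negbTE nk).
by rewrite mul1r mulr1.
Qed.

End Adj.

Section Cplx.
Local Open Scope complex_scope.
Variable R : realType.
Local Notation Re := (@complex.Re R).
Local Notation Im := (@complex.Im R).
Definition nsq (c : R[i]) : R := Re c ^+ 2 + Im c ^+ 2.
Lemma cplx_eq (a b : R[i]) : Re a = Re b -> Im a = Im b -> a = b.
Proof. by case: a b => [a1 a2] [b1 b2] /= -> ->. Qed.
Lemma ReM (a b : R[i]) : Re (a * b) = Re a * Re b - Im a * Im b.
Proof. by case: a b => [a1 a2] [b1 b2]. Qed.
Lemma ImM (a b : R[i]) : Im (a * b) = Re a * Im b + Im a * Re b.
Proof. by case: a b => [a1 a2] [b1 b2]. Qed.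
Lemma ReD (a b : R[i]) : Re (a + b) = Re a + Re b.
Proof. by case: a b => [a1 a2] [b1 b2]. Qed.
Lemma ImD (a b : R[i]) : Im (a + b) = Im a + Im b.
Proof. by case: a b => [a1 a2] [b1 b2]. Qed.
Lemma ReJ (a : R[i]) : Re (a^*) = Re a.
Proof. by case: a. Qed.
Lemma ImJ (a : R[i]) : Im (a^*) = - Im a.
Proof. by case: a. Qed.
Lemma ReC (x : R) : Re (x%:C) = x. Proof. by []. Qed.
Lemma ImC (x : R) : Im (x%:C) = 0. Proof. by []. Qed.
Lemma Re0 : Re 0 = 0. Proof. by []. Qed.
Lemma Im0 : Im 0 = 0. Proof. by []. Qed.
Lemma Re1 : Re 1 = 1. Proof. by []. Qed.
Lemma Im1 : Im 1 = 0. Proof. by []. Qed.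
Lemma ReI (a b : R) : Re (a +i* b) = a. Proof. by []. Qed.
Lemma ImI (a b : R) : Im (a +i* b) = b. Proof. by []. Qed.
Definition cE := (ReI, ImI, ReM, ImM, ReD, ImD, ReJ, ImJ, ReC, ImC, Re0, Im0, Re1, Im1).

Lemma term_id (a b c : R[i]) : a^* * b * c + c^* * b^* * a =
   (2 * (Re b * Re (a^* * c) - Im b * Im (a^* * c)))%:C.
Proof. apply: cplx_eq; rewrite !cE; ring. Qed.

Lemma term_diag (a b : R[i]) : b^* = b -> a^* * b * a = (nsq a * Re b)%:C.
Proof.
move=> hb; have hIm : Im b = 0.
  by move: (congr1 Im hb); rewrite !cE => h; lra.
apply: cplx_eq; rewrite /nsq !cE hIm; ring.
Qed.

Lemma conj_self (a : R[i]) : a^* * a = (nsq a)%:C.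
Proof. apply: cplx_eq; rewrite /nsq !cE; ring. Qed.

Lemma nsqM (a b : R[i]) : nsq (a^* * b) = nsq a * nsq b.
Proof. rewrite /nsq !cE; ring. Qed.

Lemma nsq_ge0 (a : R[i]) : 0 <= nsq a.
Proof. by rewrite /nsq addr_ge0 // sqr_ge0. Qed.

End Cplx.

Section Core.
Local Open Scope complex_scope.
Variable R : realType.
Local Notation Re := (@complex.Re R).
Local Notation Im := (@complex.Im R).
Variables (p m : nat) (i0 : 'I_p.+1) (B : 'I_m -> 'M[R[i]]_p.+1).
Hypothesis hB0 : forall j i k, i != i0 -> k != i0 -> B j i k = 0.
Hypothesis hBs : forall j, selfadj (B j).

Definition zf (t : R) (u v : 'rV[R]_p) : 'rV[R]_(1 + (p + p)) :=
  row_mx (\row_(k < 1) t) (row_mx u v).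

Definition Lmat : 'M[R]_(1 + (p + p), m) :=
  col_mx (\row_j Re (B j i0 i0))
    (col_mx (\matrix_(k, j) (2 * Re (B j i0 (lift i0 k))))
            (\matrix_(k, j) (- (2 * Im (B j i0 (lift i0 k)))))).

Definition wy (y : 'cV[R[i]]_p.+1) k := (y i0 0)^* * y (lift i0 k) 0.
Definition zy (y : 'cV[R[i]]_p.+1) :=
  zf (nsq (y i0 0)) (\row_k Re (wy y k)) (\row_k Im (wy y k)).

Lemma zf_mul t u v j : (zf t u v *m Lmat) 0 j =
  t * Re (B j i0 i0) + \sum_k (u 0 k * (2 * Re (B j i0 (lift i0 k)))
                               + v 0 k * (- (2 * Im (B j i0 (lift i0 k))))).
Proof.
rewrite /zf /Lmat !mul_row_col !mxE big_split /=; congr (_ + (_ + _)).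
  by rewrite big_ord1 !mxE.
by apply: eq_bigr => k _; rewrite !mxE.
by apply: eq_bigr => k _; rewrite !mxE.
Qed.

Lemma Bconj j i k : B j k i = (B j i k)^*.
Proof. by rewrite -{1}(hBs j) !mxE. Qed.

Lemma quad (y : 'cV[R[i]]_p.+1) j : (adjmx y *m (B j *m y)) 0 0 = ((zy y *m Lmat) 0 j)%:C.
Proof.
have liftne i : lift i0 i != i0 by rewrite eq_sym neq_lift.
have e1 i : adjmx y 0 (lift i0 i) * (B j *m y) (lift i0 i) 0 =
    (y (lift i0 i) 0)^* * (B j i0 (lift i0 i))^* * y i0 0.
  rewrite !mxE (bigD1_ord i0) //= big1 ?addr0 => [|k _].
    by rewrite Bconj mulrA.
  by rewrite hB0 // mul0r.
rewrite zf_mul rmorphD rmorph_sum /= !mxE (bigD1_ord i0) //= !mxE (bigD1_ord i0) //=.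
rewrite (eq_bigr _ (fun i _ => e1 i)) mulrDr mulrA term_diag; last by rewrite -Bconj.
rewrite -addrA mulr_sumr -big_split /=; congr (_ + _); apply: eq_bigr => k _.
rewrite mulrA term_id !mxE /wy; congr (_%:C); ring.
Qed.

Lemma normy (y : 'cV[R[i]]_p.+1) : (adjmx y *m y) 0 0 =
  (nsq (y i0 0) + \sum_k nsq (y (lift i0 k) 0))%:C.
Proof.
rewrite !mxE (bigD1_ord i0) //= rmorphD rmorph_sum /= !mxE conj_self.
by congr (_ + _); apply: eq_bigr => k _; rewrite !mxE conj_self.
Qed.

Lemma zf_first t u v : zf t u v 0 (lshift (p + p) (ord0 : 'I_1)) = t.
Proof. by rewrite /zf row_mxEl mxE. Qed.

Lemma zf_sum t u v : \sum_i zf t u v 0 i ^+ 2 = t ^+ 2 + \sum_k (u 0 k ^+ 2 + v 0 k ^+ 2).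
Proof.
rewrite big_split_ord big_ord1 /zf row_mxEl mxE; congr (_ + _).
rewrite big_split_ord big_split /=; congr (_ + _); apply: eq_bigr => k _.
  by rewrite row_mxEr row_mxEl.
by rewrite row_mxEr row_mxEr.
Qed.

Lemma zf_eta (z : 'rV[R]_(1 + (p + p))) : z = zf (z 0 (lshift (p + p) (ord0 : 'I_1)))
   (\row_k z 0 (rshift 1 (lshift p k))) (\row_k z 0 (rshift 1 (rshift p k))).
Proof.
rewrite -{1}(hsubmxK z) -(hsubmxK (rsubmx z)) /zf.
by congr (row_mx _ (row_mx _ _)); apply/rowP => k; rewrite !mxE ?ord1.
Qed.

Definition sph (z : 'rV[R]_(1 + (p + p))) :=
  \sum_i z 0 i ^+ 2 = z 0 (lshift (p + p) (ord0 : 'I_1)).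

Lemma jnr_sph a : (0 < p)%N ->
  jnr B a <-> exists z, sph z /\ a = z *m Lmat.
Proof.
move=> p_gt0; split.
  move=> [y [hy hA]]; exists (zy y); split; last first.
    by apply/rowP => j; apply: complexI; rewrite -hA quad.
  have hn : nsq (y i0 0) + \sum_k nsq (y (lift i0 k) 0) = 1.
    by apply: complexI; rewrite -normy hy.
  rewrite /sph /zy zf_sum zf_first.
  have -> : \sum_k ((\row_k0 Re (wy y k0)) 0 k ^+ 2 + (\row_k0 Im (wy y k0)) 0 k ^+ 2)
      = nsq (y i0 0) * \sum_k nsq (y (lift i0 k) 0).
    by rewrite mulr_sumr; apply: eq_bigr => k _; rewrite !mxE -nsqM.
  have -> : \sum_k nsq (y (lift i0 k) 0) = 1 - nsq (y i0 0) by rewrite -hn addrC addKr.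
  ring.
move=> [z [hz ->]].
move: (zf_eta z) hz => ->; rewrite /sph zf_sum zf_first.
move: (z 0 (lshift (p + p) (ord0 : 'I_1))) (\row_k z 0 (rshift 1 (lshift p k)))
  (\row_k z 0 (rshift 1 (rshift p k))) => t u v {z} hz.
set S := \sum_k _ in hz.
have S_ge0 : 0 <= S by apply: sumr_ge0 => k _; rewrite addr_ge0 // sqr_ge0.
have zyE : forall y : 'cV[R[i]]_p.+1, nsq (y i0 0) = t ->
    (forall k, Re (wy y k) = u 0 k) -> (forall k, Im (wy y k) = v 0 k) ->
    (forall j, (adjmx y *m (B j *m y)) 0 0 = ((zf t u v *m Lmat) 0 j)%:C).
  move=> y h1 h2 h3 j; rewrite quad /zy h1; congr ((zf _ _ _ *m _) _ _)%:C.
    by apply/rowP => k; rewrite mxE h2.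
  by apply/rowP => k; rewrite mxE h3.
have liftne k : lift i0 k != i0 by rewrite eq_sym neq_lift.
case: (eqVneq t 0) => [t0 | tn0].
  have S0 : S = 0 by move: hz; rewrite t0 expr0n /= add0r.
  have hk k : u 0 k = 0 /\ v 0 k = 0.
    have e := psumr_eq0P (fun i _ => addr_ge0 (sqr_ge0 (u 0 i)) (sqr_ge0 (v 0 i))) S0 (i:=k) isT. have hu := sqr_ge0 (u 0 k); have hv := sqr_ge0 (v 0 k).
    by split; apply/eqP; rewrite -sqrf_eq0 eq_le sqr_ge0 andbT; lra.
  pose k0 := Ordinal p_gt0.
  pose y : 'cV[R[i]]_p.+1 := \col_i (if i == lift i0 k0 then 1 else 0).
  have yl k : y (lift i0 k) 0 = if k == k0 then 1 else 0.
    by rewrite mxE (inj_eq lift_inj).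
  have y0 : y i0 0 = 0 by rewrite mxE eq_sym (negbTE (liftne _)).
  exists y; split.
    rewrite normy y0; under eq_bigr => k _ do rewrite yl.
    rewrite (bigD1 k0) //= ?eqxx big1 => [|k /negbTE ->]; last by rewrite /nsq !cE expr0n /= addr0.
    by rewrite /nsq !cE; congr (_%:C); rewrite expr0n /= expr1n; ring.
  apply: zyE => [|k|k]; rewrite ?y0 /wy ?y0.
  - by rewrite t0 /nsq !cE expr0n /= addr0.
  - by rewrite !cE (proj1 (hk k)); ring.
  - by rewrite !cE (proj2 (hk k)); ring.
have t_gt0 : 0 < t.
  by rewrite lt_neqAle eq_sym tn0 /= -hz addr_ge0 // sqr_ge0.
pose s := Num.sqrt t.
have s_gt0 : 0 < s by rewrite sqrtr_gt0.
have s2 : s ^+ 2 = t by rewrite sqr_sqrtr // ltW.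
have sn0 : s != 0 by rewrite gt_eqF.
pose y : 'cV[R[i]]_p.+1 := \col_i
  (match unlift i0 i with Some k => (u 0 k +i* v 0 k) * (s^-1)%:C | None => s%:C end).
have y0 : y i0 0 = s%:C by rewrite mxE unlift_none.
have yl k : y (lift i0 k) 0 = (u 0 k +i* v 0 k) * (s^-1)%:C by rewrite mxE liftK.
exists y; split.
  rewrite normy y0; under eq_bigr => k _ do rewrite yl.
  congr (_%:C).
  have -> : \sum_k nsq ((u 0 k +i* v 0 k) * (s^-1)%:C) = S / t.
    rewrite /S mulr_suml; apply: eq_bigr => k _; rewrite /nsq !cE -s2; field.
    by rewrite sn0.
  have -> : S = t - t ^+ 2 by lra.
  rewrite /nsq !cE s2; field => //.
apply: zyE => [|k|k]; rewrite ?y0 /wy ?y0 ?yl.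
- by rewrite /nsq !cE expr0n /= addr0.
- by rewrite !cE; field.
- by rewrite !cE; field.
Qed.

Lemma star_core : (0 < p)%N -> (m < 1 + (p + p))%N -> star_center (jnr B) 0.
Proof.
move=> p_gt0 hm.
have Lz : forall z, sph z -> jnr B (z *m Lmat).
  by move=> z hz; apply/(jnr_sph _ p_gt0); exists z.
split.
  have -> : (0 : 'rV[R]_m) = 0 *m Lmat by rewrite mul0mx.
  by apply: Lz; rewrite /sph big1 ?mxE // => i _; rewrite mxE expr0n.
move=> b /(jnr_sph _ p_gt0) [z [hz ->]] s /andP [s0 s1].
rewrite scaler0 add0r.
have kn0 : kermx Lmat != 0.
  rewrite -mxrank_eq0 mxrank_ker subn_eq0 -ltnNge.
  exact: leq_ltn_trans (rank_leq_col Lmat) hm.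
pose w := nz_row (kermx Lmat).
have wn0 : w != 0 by rewrite nz_row_eq0.
have wL : w *m Lmat = 0 by apply/sub_kermxP; exact: nz_row_sub.
pose a2 := \sum_i w 0 i ^+ 2.
have a2_gt0 : 0 < a2.
  rewrite lt_neqAle sumr_ge0 ?andbT => [|i _]; last exact: sqr_ge0.
  apply: contra wn0; rewrite eq_sym => /eqP h; apply/eqP/rowP => i; rewrite mxE.
  have := psumr_eq0P (fun i _ => sqr_ge0 (w 0 i)) h (i := i) isT.
  by move/eqP; rewrite sqrf_eq0 => /eqP.
pose zz := \sum_i z 0 i * w 0 i.
pose z0 := z 0 (lshift (p + p) (ord0 : 'I_1)).
pose w0 := w 0 (lshift (p + p) (ord0 : 'I_1)).
have z0_ge0 : 0 <= z0 by rewrite /z0 -hz sumr_ge0 // => i _; exact: sqr_ge0.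
pose b1 := 2 * s * zz - w0.
pose c0 := s ^+ 2 * z0 - s * z0.
have c0_le0 : c0 <= 0.
  have : 0 <= s * (1 - s) * z0 by rewrite !mulr_ge0 // subr_ge0.
  by rewrite /c0; lra.
pose D := b1 ^+ 2 - 4 * a2 * c0.
have D_ge0 : 0 <= D.
  have : 0 <= a2 * (- c0) by apply: mulr_ge0; [exact: ltW | rewrite oppr_ge0].
  move=> h1.
  have := sqr_ge0 b1.
  by rewrite /D; lra.
pose r := Num.sqrt D.
have r2 : r ^+ 2 = D by rewrite sqr_sqrtr.
pose lam := (r - b1) / (2 * a2).
have hq : a2 * lam ^+ 2 + b1 * lam + c0 = 0.
  have a2n0 : a2 != 0 by rewrite gt_eqF.
  have -> : a2 * lam ^+ 2 + b1 * lam + c0 = (r ^+ 2 - D) / (4 * a2).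
    by rewrite /lam /D; field.
  by rewrite r2 subrr mul0r.
apply/(jnr_sph _ p_gt0); exists (s *: z + lam *: w); split; last first.
  by rewrite mulmxDl -!scalemxAl wL scaler0 addr0.
rewrite /sph.
have -> : \sum_i (s *: z + lam *: w) 0 i ^+ 2 =
    s ^+ 2 * \sum_i z 0 i ^+ 2 + 2 * s * lam * zz + lam ^+ 2 * a2.
  rewrite (eq_bigr (fun i => s ^+ 2 * z 0 i ^+ 2 + 2 * s * lam * (z 0 i * w 0 i)
     + lam ^+ 2 * w 0 i ^+ 2)) => [|i _]; last by rewrite !mxE; ring.
  by rewrite !big_split /= -!mulr_sumr.
rewrite hz !mxE -/z0 -/w0.
apply/eqP; rewrite -subr_eq0; apply/eqP; rewrite -hq /b1 /c0; ring.
Qed.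

End Core.

Section Core2.
Local Open Scope complex_scope.
Variable R : realType.
Local Notation Re := (@complex.Re R).
Local Notation Im := (@complex.Im R).
Variables (p : nat) (i0 : 'I_p.+1) (B : 'I_(1 + (p + p)) -> 'M[R[i]]_p.+1).
Hypothesis hB0 : forall j i k, i != i0 -> k != i0 -> B j i k = 0.
Hypothesis hBs : forall j, selfadj (B j).
Hypothesis hL : lin_indep B.
Hypothesis p_gt0 : (0 < p)%N.
Local Notation L := (Lmat i0 B).

Lemma ReS I (r : seq I) (P : pred I) (F : I -> R[i]) :
  Re (\sum_(j <- r | P j) F j) = \sum_(j <- r | P j) Re (F j).
Proof. exact: (big_morph _ (@ReD R) (@Re0 R)). Qed.
Lemma ImS I (r : seq I) (P : pred I) (F : I -> R[i]) :
  Im (\sum_(j <- r | P j) F j) = \sum_(j <- r | P j) Im (F j).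
Proof. exact: (big_morph _ (@ImD R) (@Im0 R)). Qed.

Lemma L_unit : L \in unitmx.
Proof.
rewrite -unitmx_tr -row_free_unit; apply: inj_row_free => c hc.
have e r : \sum_j c 0 j * L r j = 0.
  have := congr1 (fun M : 'rV[R]_(1 + (p + p)) => M 0 r) hc; rewrite !mxE => h; rewrite -[RHS]h.
  by apply: eq_bigr => j _; rewrite [X in _ = _ * X]mxE.
have h0 : \sum_j c 0 j * Re (B j i0 i0) = 0.
  rewrite -[RHS](e (lshift (p + p) (ord0 : 'I_1))); apply: eq_bigr => j _.
  by rewrite /Lmat col_mxEu mxE.
have h1 k : \sum_j c 0 j * Re (B j i0 (lift i0 k)) = 0.
  have := e (rshift 1 (lshift p k)); rewrite /Lmat.
  under eq_bigr => j _ do rewrite col_mxEd col_mxEu mxE mulrA [c 0 j * 2]mulrC -mulrA.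
  by rewrite -mulr_sumr => /eqP; rewrite mulf_eq0 pnatr_eq0 /= => /eqP.
have h2 k : \sum_j c 0 j * Im (B j i0 (lift i0 k)) = 0.
  have := e (rshift 1 (rshift p k)); rewrite /Lmat.
  under eq_bigr => j _ do rewrite col_mxEd col_mxEd mxE mulrN mulrA [c 0 j * 2]mulrC -mulrA -mulNr.
  by rewrite -mulr_sumr => /eqP; rewrite mulf_eq0 oppr_eq0 pnatr_eq0 /= => /eqP.
have Mc : \sum_j (c 0 j)%:C *: B j = 0.
  apply/matrixP => i k; rewrite summxE mxE.
  under eq_bigr => j _ do rewrite mxE.
  have hRe : forall i k, Re (\sum_j (c 0 j)%:C * B j i k) = \sum_j c 0 j * Re (B j i k).
    by move=> i' k'; rewrite ReS; apply: eq_bigr => j _; rewrite !cE; ring.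
  have hIm : forall i k, Im (\sum_j (c 0 j)%:C * B j i k) = \sum_j c 0 j * Im (B j i k).
    by move=> i' k'; rewrite ImS; apply: eq_bigr => j _; rewrite !cE; ring.
  case: (unliftP i0 i) => [i'|] ->; case: (unliftP i0 k) => [k'|] ->.
  - by rewrite big1 // => j _; rewrite hB0 ?mulr0 // eq_sym neq_lift.
  - apply: cplx_eq; rewrite ?hRe ?hIm !cE.
      by rewrite -[RHS](h1 i'); apply: eq_bigr => j _; rewrite (Bconj hBs) ReJ.
    rewrite -[RHS]oppr0 -[in RHS](h2 i') -sumrN; apply: eq_bigr => j _.
    by rewrite (Bconj hBs) ImJ mulrN.
  - by apply: cplx_eq; rewrite ?hRe ?hIm !cE ?h1 ?h2.
  - apply: cplx_eq; rewrite ?hRe ?hIm !cE ?h0 //.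
    apply: big1 => j _.
    have := Bconj hBs j i0 i0 => /(congr1 Im); rewrite ImJ => h.
    have -> : Im (B j i0 i0) = 0 by lra.
    by rewrite mulr0.
apply/rowP => j; rewrite mxE; exact: hL Mc j.
Qed.
Lemma zfD a x y b x' y' :
  zf a x y + zf b x' y' = zf (a + b) (x + x') (y + y') :> 'rV[R]_(1 + (p + p)).
Proof.
rewrite /zf !add_row_mx; congr (row_mx _ _); apply/rowP => k; rewrite !mxE //.
Qed.

Lemma zfN a x y : - zf a x y = zf (- a) (- x) (- y) :> 'rV[R]_(1 + (p + p)).
Proof.
rewrite /zf !opp_row_mx; congr (row_mx _ _); apply/rowP => k; rewrite !mxE //.
Qed.

Lemma zfZ c a x y : c *: zf a x y = zf (c * a) (c *: x) (c *: y) :> 'rV[R]_(1 + (p + p)).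
Proof.
rewrite /zf !scale_row_mx; congr (row_mx _ _); apply/rowP => k; rewrite !mxE //.
Qed.

Lemma zf_gen (P : 'rV[R]_(1 + (p + p)) -> Prop) :
  (forall t x y, P (zf t x y)) -> forall z, P z.
Proof. by move=> h z; rewrite (zf_eta z). Qed.

Definition rowu (u : 'rV[R]_(1 + (p + p))) : 'rV[R]_(1 + (p + p)) :=
  \row_j (if (j : nat) == 0%N then 1 + u 0 j else u 0 j).

Lemma rowu_zf t x y : rowu (zf t x y) = zf (1 + t) x y.
Proof.
have e0 : ((lshift (p + p) (ord0 : 'I_1) : nat) == 0%N) = true by [].
have e1 (k : 'I_(p + p)) : ((rshift 1 k : nat) == 0%N) = false by [].
have rE u j : rowu u 0 j = if (j : nat) == 0%N then 1 + u 0 j else u 0 j by rewrite mxE.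
rewrite {1}(zf_eta (rowu _)) rE e0 zf_first; congr zf; apply/rowP => k; rewrite [LHS]mxE rE e1.
  by rewrite /zf row_mxEr row_mxEl.
by rewrite /zf row_mxEr row_mxEr.
Qed.

Lemma sum_sq_scale c (x y : 'rV[R]_p) :
  \sum_k ((c *: x) 0 k ^+ 2 + (c *: y) 0 k ^+ 2) = c ^+ 2 * \sum_k (x 0 k ^+ 2 + y 0 k ^+ 2).
Proof. by rewrite mulr_sumr; apply: eq_bigr => k _; rewrite !mxE; ring. Qed.

Lemma sum_sq_opp (x y : 'rV[R]_p) :
  \sum_k ((- x) 0 k ^+ 2 + (- y) 0 k ^+ 2) = \sum_k (x 0 k ^+ 2 + y 0 k ^+ 2).
Proof. by apply: eq_bigr => k _; rewrite !mxE; ring. Qed.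

Lemma core_a :
  (exists S : 'M[R]_(1 + (p + p)), S \in unitmx /\
     forall a : 'rV[R]_(1 + (p + p)),
       jnr B a <->
       exists u : 'rV[R]_(1 + (p + p)), \sum_(j < 1 + (p + p)) u 0 j ^+ 2 = 1 /\
         a = (\row_(j < 1 + (p + p)) (if (j : nat) == 0%N then 1 + u 0 j else u 0 j)) *m S)
  /\ ~ star_shaped (jnr B).
Proof.
have h2 : (2 : R) != 0 by rewrite pnatr_eq0.
have Lu := L_unit.
split.
  exists (2^-1 *: L); split.
    by rewrite unitmxZ // unitfE invr_eq0.
  move=> a; rewrite (jnr_sph hB0 hBs a p_gt0); split.
    move=> [z [hz ->]]; move: z hz; apply: zf_gen => t x y.
    rewrite /sph zf_sum zf_first => hz.
    exists (zf (2 * t - 1) (2 *: x) (2 *: y)); split.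
      by rewrite zf_sum sum_sq_scale; lra.
    have -> : \row_(j < 1 + (p + p)) (if (j : nat) == 0%N then 1 + zf (2 * t - 1) (2 *: x) (2 *: y) 0 j
               else zf (2 * t - 1) (2 *: x) (2 *: y) 0 j) = 2 *: zf t x y.
      by rewrite -[LHS]/(rowu _) rowu_zf zfZ; congr zf; ring.
    by rewrite -scalemxAr -scalemxAl scalerA mulVf // scale1r.
  move=> [u [hu ->]]; move: u hu; apply: zf_gen => t x y.
  rewrite zf_sum => hu.
  exists (2^-1 *: zf (1 + t) x y); split; last first.
    by rewrite -[\row_j _]/(rowu _) rowu_zf -scalemxAr -scalemxAl.
  rewrite zfZ /sph zf_sum zf_first sum_sq_scale.
  have -> : \sum_k (x 0 k ^+ 2 + y 0 k ^+ 2) = 1 - t ^+ 2 by lra.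
  by field.
move=> [c [hc hstar]]; move: hc => /(jnr_sph hB0 hBs c p_gt0) [z [hz ec]].
have hz' : sph (zf 1 0 0 - z).
  move: z hz {ec}; apply: zf_gen => t x y; rewrite /sph !zf_sum !zf_first => hz.
  rewrite zfN zfD zf_sum zf_first !add0r sum_sq_opp; lra.
have hh : (0 <= (2^-1 : R) <= 1) by apply/andP; split; lra.
have hb : jnr B ((zf 1 0 0 - z) *m L).
  by apply/(jnr_sph hB0 hBs _ p_gt0); exists (zf 1 0 0 - z).
move: (hstar _ hb _ hh).
move=> /(jnr_sph hB0 hBs _ p_gt0) [z'' [hz'' e'']].
have : z'' = 2^-1 *: zf 1 0 0.
  have Lf : row_free L by rewrite row_free_unit.
  apply: (row_free_inj Lf) => /=.
  rewrite -e'' ec.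
  have -> : 1 - 2^-1 = 2^-1 :> R by field.
  by rewrite -scalerDr -mulmxDl [z + _]addrC subrK scalemxAl.
move=> ez; move: hz''; rewrite ez zfZ /sph zf_sum zf_first big1 => [|k _]; last by rewrite !mxE; ring.
move=> h; have e2 : 2 * (2^-1 : R) = 1 by rewrite mulfV.
move: h; rewrite addr0 mulr1 => h.
have e3 : 2 * ((2^-1 : R) ^+ 2) = 2^-1 by rewrite expr2 mulrA e2 mul1r.
rewrite h in e3.
have e4 : (2^-1 : R) = 0 by lra.
by move: e2; rewrite e4 mulr0 => /eqP; rewrite eq_sym oner_eq0.
Qed.

End Core2.


Section Final.
Local Open Scope sesquilinear_scope.
Variable R : realType.

Lemma jnr_conj2 n m (A A' : 'I_m -> 'M[R[i]]_n) (U : 'M[R[i]]_n) a :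
  U ^t conjC *m U = 1%:M -> (forall j, A' j = U *m A j *m U ^t conjC) ->
  jnr A a -> jnr A' a.
Proof.
move=> UU e h; have [x [h1 h2]] := jnr_conj UU h; exists x; split => // j.
by rewrite e; exact: h2.
Qed.

Lemma star_transfer m (S1 S2 : 'rV[R]_m -> Prop) c :
  (forall a, S1 a <-> S2 a) -> star_center S1 c -> star_center S2 c.
Proof.
move=> e [h1 h2]; split; first by apply/e.
by move=> b /e hb t ht; apply/e; exact: h2.
Qed.

End Final.
End Aux.
Import Aux.

Theorem proposition3p5 (R : realType) (n m : nat) (A : 'I_m -> 'M[R[i]]_n) :
  (2 <= n)%N ->
  (forall j, selfadj (A j)) ->
  lin_indep A ->
  Lambda (n.-1) A 0 ->
  ((m = (2 * n).-1)%N ->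
     (exists S : 'M[R]_m, S \in unitmx /\
        forall a : 'rV[R]_m,
          jnr A a <->
          exists u : 'rV[R]_m, \sum_(j < m) u 0 j ^+ 2 = 1 /\
            a = (\row_(j < m) (if (j : nat) == 0%N then 1 + u 0 j else u 0 j)) *m S)
     /\ ~ star_shaped (jnr A))
  /\
  ((m < (2 * n).-1)%N -> star_center (jnr A) 0).
Proof.
Local Open Scope sesquilinear_scope.
Import Num.Def.
move=> n2 hs hli [P [hP hPA]].
have [V [Vu [i0 Peq]]] := proj_diag n2 hP.
have VV : V *m V ^t conjC = 1%:M := unitarymxP Vu.
have VtV : V ^t conjC *m V = 1%:M.
  have Vu' : V ^t conjC \is unitarymx by rewrite trmxC_unitary.
  by have := unitarymxP Vu'; rewrite trmxCK.
pose B j := V *m A j *m V ^t conjC.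
have hB0 : forall j i k, i != i0 -> k != i0 -> B j i k = 0.
  move=> j; apply: (block_zero Vu Peq).
  by rewrite hPA mxE scale0r.
have hBs : forall j, selfadj (B j) by move=> j; exact: selfadj_conj.
have hBl : lin_indep B := lin_indep_conj VtV hli.
have jeq : forall a, jnr A a <-> jnr B a.
  move=> a; split; first exact: jnr_conj2 VtV (fun j => erefl).
  apply: (jnr_conj2 (U := V ^t conjC)); first by rewrite trmxCK.
  by move=> j; rewrite trmxCK /B !mulmxA VtV mul1mx -mulmxA VtV mulmx1.
move: i0 B Peq hB0 hBs hBl jeq {hPA}; case: n A hs hli n2 P V hP Vu VV VtV => [|p] A hs hli n2 //.
move=> P V hP Vu VV VtV i0 B Peq hB0 hBs hBl jeq.
have p_gt0 : (0 < p)%N by [].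
split.
  move=> hm; have hm' : m = (1 + (p + p))%N by lia.
  clear hm; subst m.
  have [[S [Su HS]] HN] := core_a hB0 hBs hBl p_gt0.
  split.
    exists S; split => // a; rewrite jeq; exact: HS.
  move=> [c hc]; apply: HN; exists c; apply: star_transfer hc => a.
  exact: jeq.
move=> hm; have hm' : (m < 1 + (p + p))%N by lia.
have := star_core hB0 hBs p_gt0 hm'.
by apply: star_transfer => a; split => /jeq.
Qed.
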